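(* If $2\le n\le 3$, then $\mathrm{A}=\mathrm{Q}=\mathrm{P}=\mathrm{Z}^\times(\mathrm{C}^{\times(0)}\cup\mathrm{C}^{\times(1)})$. If $n=4$, then $\mathrm{Q}\neq\mathrm{A}$.
   Context: Let $\mathrm{C}$ be either the real Clifford algebra $C\ell_{p,q}$ with $p+q=n$, or the complex Clifford algebra $C\ell(\mathbb{C}^n)$. It has identity $e$ and generators $e_1,\dots,e_n$ satisfying $e_ae_b+e_be_a=2\eta_{ab}e$. In the real case $\eta=\mathrm{diag}(1,\dots,1,-1,\dots,-1)$ with $p$ entries $+1$ and $q$ entries $-1$. In the complex case $\eta=I_n$. $\mathrm{C}^k$ is the grade-$k$ subspace, spanned by the products $e_{a_1}\cdots e_{a_k}$ with $a_1<\dots<a_k$. The even subspace is $\mathrm{C}^{(0)}=\bigoplus_{k\text{ even}}\mathrm{C}^k$ and the odd subspace is $\mathrm{C}^{(1)}=\bigoplus_{k\text{ odd}}\mathrm{C}^k$. The reversion $U\mapsto\tilde U$ is the linear anti-automorphism acting on $\mathrm{C}^k$ as $(-1)^{k(k-1)/2}$. For $S\subseteq\mathrm{C}$, $S^\times$ is the set of elements of $S$ invertible in $\mathrm{C}$, and $\mathrm{C}^{\times(j)}:=(\mathrm{C}^{(j)})^\times$. $\mathrm{Z}$ is the center: $\mathrm{Z}=\mathrm{C}^0$ for $n$ even and $\mathrm{Z}=\mathrm{C}^0\oplus\mathrm{C}^n$ for $n$ odd. Define: <ul> <li>$\mathrm{P}:=\mathrm{Z}^\times(\mathrm{C}^{\times(0)}\cup\mathrm{C}^{\times(1)})=\{WT: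 W\in\mathrm{Z}^\times, T\in\mathrm{C}^{\times(0)}\cup\mathrm{C}^{\times(1)}\}$;</li> <li>$\mathrm{A}:=\{T\in\mathrm{C}^\times:\tilde TT\in\mathrm{Z}^\times\}$;</li> <li>$\mathrm{Q}:=\{T\in\mathrm{P}:\tilde TT\in\mathrm{Z}^\times\}$.</li> </ul> *)

(* Defs.v *)
From mathcomp Require Import all_boot all_algebra.
From mathcomp Require Import reals complex.
Set Implicit Arguments. Unset Strict Implicit. Unset Printing Implicit Defensive.
Import GRing.Theory.
Local Open Scope ring_scope.

Section Clifford.
Variables (F : fieldType) (n : nat) (eta : 'I_n -> F).

(* An element of the Clifford algebra with diagonal metric eta is given by its
   coordinates U A on the basis blades e_A = e_{a_1} ... e_{a_k}
   (A = {a_1 < ... < a_k} a subset of {0,..,n-1}). *)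
Definition clif := {ffun {set 'I_n} -> F}.

(* number of pairs (a,b), a in A, b in B, b < a (reordering sign) *)
Definition inv_count (A B : {set 'I_n}) : nat :=
  #|[set ab : 'I_n * 'I_n | [&& ab.1 \in A, ab.2 \in B & (ab.2 < ab.1)%N]]|.

(* e_A e_B = blade_coef A B * e_(A symdiff B) *)
Definition blade_coef (A B : {set 'I_n}) : F :=
  (-1) ^+ inv_count A B * \prod_(i in A :&: B) eta i.

Definition symd (A B : {set 'I_n}) : {set 'I_n} := (A :\: B) :|: (B :\: A).

Definition cmul (U V : clif) : clif :=
  [ffun C : {set 'I_n} => \sum_(A : {set 'I_n}) \sum_(B : {set 'I_n} | symd A B == C)
               U A * V B * blade_coef A B].

Definition cone : clif := [ffun A : {set 'I_n} => (A == set0)%:R].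

Definition cinvertible (U : clif) : Prop :=
  exists V : clif, cmul U V = cone /\ cmul V U = cone.

Definition even_elt (U : clif) : Prop := forall A : {set 'I_n}, odd #|A| -> U A = 0.
Definition odd_elt (U : clif) : Prop := forall A : {set 'I_n}, ~~ odd #|A| -> U A = 0.

Definition crev (U : clif) : clif :=
  [ffun A : {set 'I_n} => (-1) ^+ ((#|A| * (#|A| - 1)) %/ 2) * U A].

Definition in_center (U : clif) : Prop :=
  if odd n then forall A : {set 'I_n}, A != set0 -> A != setT -> U A = 0
  else forall A : {set 'I_n}, A != set0 -> U A = 0.

Definition center_unit (U : clif) : Prop := in_center U /\ cinvertible U.

Definition inP (T : clif) : Prop :=
  exists W S : clif, center_unit W /\ cinvertible S /\
    (even_elt S \/ odd_elt S) /\ T = cmul W S.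

Definition inA (T : clif) : Prop :=
  cinvertible T /\ center_unit (cmul (crev T) T).

Definition inQ (T : clif) : Prop :=
  inP T /\ center_unit (cmul (crev T) T).

End Clifford.

Definition eta_pq (R : realType) (p q : nat) : 'I_(p + q) -> R :=
  fun i => if (i < p)%N then 1 else -1.

Definition eta_C (R : realType) (n : nat) : 'I_n -> R[i] := fun _ => 1.

Arguments eta_pq R p q : clear implicits.
Arguments eta_C R n : clear implicits.

(* Main.v *)
Require Import Defs.
From mathcomp Require Import all_boot all_algebra.
From mathcomp Require Import reals complex.
From mathcomp Require Import ring zify.
Set Implicit Arguments. Unset Strict Implicit. Unset Printing Implicit Defensive.
Import GRing.Theory.
Local Open Scope ring_scope.

Section Sec_G_Gen.
Variables (F : fieldType) (n : nat) (eta : 'I_n -> F).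

Lemma symdK (A B : {set 'I_n}) : symd A (symd A B) = B.
Proof. by apply/setP => i; rewrite /symd !inE; case: (i \in A); case: (i \in B). Qed.

Lemma symdC (A B : {set 'I_n}) : symd A B = symd B A.
Proof. by rewrite /symd setUC. Qed.

Lemma symd0 (A : {set 'I_n}) : symd set0 A = A.
Proof. by apply/setP => i; rewrite /symd !inE; case: (i \in A). Qed.

Lemma symdd (A : {set 'I_n}) : symd A A = set0.
Proof. by apply/setP => i; rewrite /symd !inE; case: (i \in A). Qed.

Lemma cmulE (U V : clif F n) C :
  cmul eta U V C = \sum_(A : {set 'I_n}) U A * V (symd A C) * blade_coef eta A (symd A C).
Proof.
rewrite ffunE; apply: eq_bigr => A _.
rewrite (big_pred1 (symd A C)) // => B /=.
apply/eqP/eqP => [<-|->]; by rewrite symdK.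
Qed.

Lemma blade_coef0l C : blade_coef eta set0 C = 1.
Proof.
rewrite /blade_coef /inv_count.
have -> : [set ab : 'I_n * 'I_n | [&& ab.1 \in set0, ab.2 \in C & (ab.2 < ab.1)%N]] = set0.
  by apply/setP => ab; rewrite !inE.
by rewrite cards0 expr0 mul1r set0I big_set0.
Qed.

Lemma blade_coef0r C : blade_coef eta C set0 = 1.
Proof.
rewrite /blade_coef /inv_count.
have -> : [set ab : 'I_n * 'I_n | [&& ab.1 \in C, ab.2 \in set0 & (ab.2 < ab.1)%N]] = set0.
  by apply/setP => ab; rewrite !inE andbF.
by rewrite cards0 expr0 mul1r setI0 big_set0.
Qed.

Definition sc (a : F) : clif F n := [ffun A : {set 'I_n} => (A == set0)%:R * a].

Lemma cone_sc : @cone F n = sc 1.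
Proof. by apply/ffunP => A; rewrite !ffunE mulr1. Qed.

Lemma cmul_scl a (V : clif F n) : cmul eta (sc a) V = [ffun A => a * V A].
Proof.
apply/ffunP => C; rewrite cmulE ffunE (bigD1 set0) //= big1 ?addr0.
  by rewrite ffunE eqxx mul1r symd0 blade_coef0l mulr1.
by move=> A HA; rewrite ffunE (negbTE HA) mul0r !mul0r.
Qed.

Lemma cmul_scr a (U : clif F n) : cmul eta U (sc a) = [ffun A => a * U A].
Proof.
apply/ffunP => C; rewrite cmulE ffunE (bigD1 C) //= big1 ?addr0.
  by rewrite ffunE symdd eqxx mul1r blade_coef0r mulr1 mulrC.
move=> A HA; rewrite ffunE.
have -> : (symd A C == set0) = false.
  apply/negbTE; apply: contra HA => /eqP H.
  by rewrite -(symdK A C) H /symd setD0 set0D setU0.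
by rewrite mul0r mulr0 mul0r.
Qed.


Definition scl (a : F) (V : clif F n) : clif F n := [ffun A => a * V A].

Lemma cmulZr a (U V : clif F n) : cmul eta U (scl a V) = scl a (cmul eta U V).
Proof.
apply/ffunP => C; rewrite [RHS]ffunE !cmulE mulr_sumr; apply: eq_bigr => A _.
rewrite ffunE; ring.
Qed.

Lemma cmulZl a (U V : clif F n) : cmul eta (scl a U) V = scl a (cmul eta U V).
Proof.
apply/ffunP => C; rewrite [RHS]ffunE !cmulE mulr_sumr; apply: eq_bigr => A _.
rewrite ffunE; ring.
Qed.

Lemma scl_sc a b : scl a (sc b) = sc (a * b).
Proof. apply/ffunP => A; rewrite !ffunE; ring. Qed.

Lemma scl1 (V : clif F n) : scl 1 V = V.
Proof. by apply/ffunP => A; rewrite ffunE mul1r. Qed.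

Lemma cmul1l (V : clif F n) : cmul eta (@cone F n) V = V.
Proof. by rewrite cone_sc cmul_scl; apply/ffunP => A; rewrite ffunE mul1r. Qed.

Lemma cmul1r (V : clif F n) : cmul eta V (@cone F n) = V.
Proof. by rewrite cone_sc cmul_scr; apply/ffunP => A; rewrite ffunE mul1r. Qed.

Lemma sc_set0 a : sc a set0 = a.
Proof. by rewrite ffunE eqxx mul1r. Qed.

Lemma not_inv0 : ~ cinvertible eta (sc 0).
Proof.
case=> V [H _]; have := congr1 (fun f : clif F n => f set0) H.
by rewrite cmul_scl !ffunE eqxx mul0r /= => /eqP; rewrite eq_sym oner_eq0.
Qed.

Lemma sc_inv k : cinvertible eta (sc k) -> k != 0.
Proof. by move=> H; apply/eqP => Hk; subst k; apply: not_inv0. Qed.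

Lemma sc_invertible k : k != 0 -> cinvertible eta (sc k).
Proof.
move=> Hk; exists (sc k^-1); rewrite cmul_scl cmul_scr !cone_sc; split;
 apply/ffunP => A; rewrite !ffunE; by field.
Qed.

Lemma sc_center k : in_center (sc k).
Proof. by rewrite /in_center; case: ifP => _ A HA *; rewrite ffunE (negbTE HA) mul0r. Qed.

Lemma crev0 (X : clif F n) : crev X = sc 0 -> X = sc 0.
Proof.
move=> H; apply/ffunP => A; have := congr1 (fun f : clif F n => f A) H.
rewrite !ffunE mulr0 => /eqP; rewrite mulf_eq0 signr_eq0 /= => /eqP ->; by [].
Qed.

Lemma inv_of_norm (X : clif F n) k :
  cmul eta (crev X) X = sc k -> cmul eta X (crev X) = sc k -> k != 0 -> cinvertible eta X.
Proof.
move=> H1 H2 Hk; exists (scl k^-1 (crev X)); rewrite cmulZr cmulZl H1 H2 scl_sc mulVf //.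
by rewrite cone_sc.
Qed.

Section Sec_G_Assoc.
Hypothesis assoc : forall X Y Z : clif F n, cmul eta (cmul eta X Y) Z = cmul eta X (cmul eta Y Z).

Lemma inv_mul (X Y : clif F n) : cinvertible eta X -> cinvertible eta Y -> cinvertible eta (cmul eta X Y).
Proof.
move=> [X' [HX1 HX2]] [Y' [HY1 HY2]]; exists (cmul eta Y' X'); split.
  by rewrite assoc -(assoc Y) HY1 cmul1l.
by rewrite assoc -(assoc X') HX2 cmul1l.
Qed.

Lemma zero_div (U Z : clif F n) : cinvertible eta U -> cmul eta Z U = sc 0 -> Z = sc 0.
Proof.
move=> [V [H1 H2]] H; rewrite -(cmul1r Z) -H1 -assoc H cmul_scl.
by apply/ffunP => A; rewrite !ffunE !mul0r mulr0.
Qed.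

Lemma rev_norm_nz (X : clif F n) k : cinvertible eta X -> cmul eta (crev X) X = sc k -> k != 0.
Proof.
move=> HX H; apply/eqP => Hk; subst k.
have := crev0 (zero_div HX H) => HX0; move: HX; rewrite HX0; exact: not_inv0.
Qed.
End Sec_G_Assoc.

End Sec_G_Gen.
Arguments sc {F n} a.
Set Implicit Arguments. Unset Strict Implicit. Unset Printing Implicit Defensive.
Import GRing.Theory.
Local Open Scope ring_scope.

Section Sec_T3_Gen2.
Variables (F : fieldType) (n : nat) (eta : 'I_n -> F).
Lemma inv_countE (A B : {set 'I_n}) :
  inv_count A B = (\sum_(a < n) \sum_(b < n) [&& a \in A, b \in B & (b < a)%N])%N.
Proof.
rewrite /inv_count -sum1_card big_mkcond /= pair_bigA /=.
by apply: eq_bigr => ab _; rewrite inE; case: [&& _, _ & _].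
Qed.
Lemma prodE (A B : {set 'I_n}) :
  \prod_(i in A :&: B) eta i = \prod_(i < n) (if (i \in A) && (i \in B) then eta i else 1).
Proof. by rewrite big_mkcond; apply: eq_bigr => i _; rewrite inE. Qed.
End Sec_T3_Gen2.

Section Sec_T3_N3.
Variables (F : fieldType) (eta : 'I_3 -> F).
Definition i0 : 'I_3 := @Ordinal 3 0 isT.
Definition i1 : 'I_3 := @Ordinal 3 1 isT.
Definition i2 : 'I_3 := @Ordinal 3 2 isT.
Definition sb3 (a0 a1 a2 : bool) : {set 'I_3} := [set i : 'I_3 | nth false [:: a0; a1; a2] i].
Lemma in_sb3 a0 a1 a2 i : (i \in sb3 a0 a1 a2) = nth false [:: a0; a1; a2] i.
Proof. by rewrite inE. Qed.
Lemma sb3_bits (A : {set 'I_3}) : A = sb3 (i0 \in A) (i1 \in A) (i2 \in A).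
Proof.
apply/setP => i; rewrite in_sb3; case: i => [[|[|[|//]]] Hi] /=;
 by congr (_ \in A); apply: val_inj.
Qed.
Lemma sum3 (G : {set 'I_3} -> F) :
  \sum_(A : {set 'I_3}) G A = \sum_(a0 : bool) \sum_(a1 : bool) \sum_(a2 : bool) G (sb3 a0 a1 a2).
Proof.
transitivity (\sum_(p : bool * bool * bool) G (sb3 p.1.1 p.1.2 p.2)).
  rewrite (reindex (fun p : bool * bool * bool => sb3 p.1.1 p.1.2 p.2)) //.
  exists (fun A : {set 'I_3} => (i0 \in A, i1 \in A, i2 \in A)) => [[[a0 a1] a2] _|A _] /=.
    by rewrite !in_sb3.
  by rewrite -sb3_bits.
rewrite -(pair_bigA _ (fun (i : bool * bool) (j : bool) => G (sb3 i.1 i.2 j))) /=.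
by rewrite -(pair_bigA _ (fun i j => \sum_(k : bool) G (sb3 i j k))).
Qed.
Definition sgn (b : bool) : F := if b then -1 else 1.
Definition ee (b : bool) (x : F) := if b then x else 1.
Definition bc3 a0 a1 a2 b0 b1 b2 :=
  sgn ((a1 && b0) (+) (a2 && b0) (+) (a2 && b1)) *
  (ee (a0 && b0) (eta i0) * ee (a1 && b1) (eta i1) * ee (a2 && b2) (eta i2)).
Lemma blade_coef_sb3 a0 a1 a2 b0 b1 b2 :
  blade_coef eta (sb3 a0 a1 a2) (sb3 b0 b1 b2) = bc3 a0 a1 a2 b0 b1 b2.
Proof.
rewrite /blade_coef inv_countE prodE.
rewrite !big_ord_recr !big_ord0 /= !in_sb3 /=.
have -> : widen_ord (leqnSn 2) (widen_ord (leqnSn 1) ord_max) = i0 by apply: val_inj.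
have -> : widen_ord (leqnSn 2) ord_max = i1 by apply: val_inj.
have -> : ord_max = i2 by apply: val_inj.
rewrite -signr_odd !oddD.
by case: a0; case: a1; case: a2; case: b0; case: b1; case: b2;
  rewrite /bc3 /sgn /ee /= ?expr0 ?expr1 ?mul1r ?mulr1.
Qed.

Lemma symd_sb3 a0 a1 a2 b0 b1 b2 :
  symd (sb3 a0 a1 a2) (sb3 b0 b1 b2) = sb3 (a0 (+) b0) (a1 (+) b1) (a2 (+) b2).
Proof.
apply/setP => i; rewrite /symd !inE.
by case: i => [[|[|[|//]]] Hi] /=; [case: a0; case: b0|case: a1; case: b1|case: a2; case: b2].
Qed.

Lemma cmul_sb3 (U V : clif F 3) c0 c1 c2 :
  cmul eta U V (sb3 c0 c1 c2) = \sum_(a0 : bool) \sum_(a1 : bool) \sum_(a2 : bool)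
    U (sb3 a0 a1 a2) * V (sb3 (a0 (+) c0) (a1 (+) c1) (a2 (+) c2)) *
    bc3 a0 a1 a2 (a0 (+) c0) (a1 (+) c1) (a2 (+) c2).
Proof.
rewrite cmulE sum3; apply: eq_bigr => a0 _; apply: eq_bigr => a1 _; apply: eq_bigr => a2 _.
by rewrite symd_sb3 blade_coef_sb3.
Qed.

Definition mk3 (f : bool -> bool -> bool -> F) : clif F 3 :=
  [ffun A : {set 'I_3} => f (i0 \in A) (i1 \in A) (i2 \in A)].
Lemma mk3E f a0 a1 a2 : mk3 f (sb3 a0 a1 a2) = f a0 a1 a2.
Proof. by rewrite ffunE !in_sb3. Qed.

Lemma clif_eq3 (U V : clif F 3) :
  (forall a0 a1 a2, U (sb3 a0 a1 a2) = V (sb3 a0 a1 a2)) -> U = V.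
Proof. by move=> H; apply/ffunP => A; rewrite (sb3_bits A); apply: H. Qed.

Lemma card_sb3 a0 a1 a2 : #|sb3 a0 a1 a2| = (a0 + a1 + a2)%N.
Proof.
rewrite -sum1_card big_mkcond !big_ord_recr big_ord0 /= !in_sb3 /=.
by case: a0; case: a1; case: a2.
Qed.

Definition rv3 a0 a1 a2 := sgn ((a0 && a1) || (a0 && a2) || (a1 && a2)).
Lemma crev_sb3 (U : clif F 3) a0 a1 a2 :
  crev U (sb3 a0 a1 a2) = rv3 a0 a1 a2 * U (sb3 a0 a1 a2).
Proof.
rewrite ffunE card_sb3 -signr_odd.
by case: a0; case: a1; case: a2.
Qed.

Lemma sb3_set0 a0 a1 a2 : (a0 || a1 || a2) -> sb3 a0 a1 a2 != set0.
Proof.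
move=> H; apply/set0Pn.
case: a0 H => [_|]; first by exists i0; rewrite in_sb3.
case: a1 => [_|]; first by exists i1; rewrite in_sb3.
by case: a2 => // _; exists i2; rewrite in_sb3.
Qed.
Lemma sb3_setT a0 a1 a2 : ~~ (a0 && a1 && a2) -> sb3 a0 a1 a2 != setT.
Proof.
move=> H; apply/negP => /eqP E.
case: a0 E H => E; last by have := in_setT i0; rewrite -E in_sb3.
case: a1 E => E; last by have := in_setT i1; rewrite -E in_sb3.
by case: a2 E => E //; have := in_setT i2; rewrite -E in_sb3.
Qed.
Lemma sb3_000 : sb3 false false false = set0.
Proof. by apply/setP => i; rewrite in_sb3 inE; case: i => [[|[|[|]]]]. Qed.
Lemma sb3_111 : sb3 true true true = setT.
Proof. by apply/setP => i; rewrite in_sb3 inE; case: i => [[|[|[|]]]]. Qed.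

Definition mkE (a b c d : F) := mk3 (fun x y z =>
  match x, y, z with false, false, false => a | true, true, false => b
  | true, false, true => c | false, true, true => d | _, _, _ => 0 end).
Definition mkO (a b c d : F) := mk3 (fun x y z =>
  match x, y, z with true, false, false => a | false, true, false => b
  | false, false, true => c | true, true, true => d | _, _, _ => 0 end).
Definition mkZ (a d : F) := mk3 (fun x y z =>
  match x, y, z with false, false, false => a | true, true, true => d | _, _, _ => 0 end).

Lemma sc_sb3 k a0 a1 a2 : @sc F 3 k (sb3 a0 a1 a2) = if a0 || a1 || a2 then 0 else k.
Proof.
rewrite ffunE; case: ifP => H; first by rewrite (negbTE (sb3_set0 H)) mul0r.
by move: H; case: a0; case: a1; case: a2 => // _; rewrite sb3_000 eqxx mul1r.
Qed.

Ltac expand := rewrite ?cmul_sb3 ?big_bool /= ?crev_sb3 ?cmul_sb3 ?big_bool /= ?mk3E ?sc_sb3 /= /rv3 /bc3 /sgn /ee /=.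

Definition c3 := - (eta i0 * eta i1 * eta i2).
Definition nE (a b c d : F) := a ^+ 2 + eta i0 * eta i1 * b ^+ 2 + eta i0 * eta i2 * c ^+ 2 + eta i1 * eta i2 * d ^+ 2.

Lemma L1a a b c d : cmul eta (crev (mkE a b c d)) (mkE a b c d) = sc (nE a b c d).
Proof.
apply: clif_eq3 => a0 a1 a2; case: a0; case: a1; case: a2; expand.
all: rewrite /nE; ring.
Qed.

Lemma assoc3 (X Y Z : clif F 3) : cmul eta (cmul eta X Y) Z = cmul eta X (cmul eta Y Z).
Proof.
apply: clif_eq3 => a0 a1 a2; case: a0; case: a1; case: a2; expand; ring.
Qed.
End Sec_T3_N3.
Set Implicit Arguments. Unset Strict Implicit. Unset Printing Implicit Defensive.
Import GRing.Theory.
Local Open Scope ring_scope.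

Section Sec_M3_M3.
Variables (F : fieldType) (eta : 'I_3 -> F).
Ltac expand := rewrite ?cmul_sb3 ?big_bool /= ?crev_sb3 ?cmul_sb3 ?big_bool /= ?mk3E ?sc_sb3 /= /rv3 /bc3 /sgn /ee /=.
Ltac cases := apply: clif_eq3; case; case; case.

Definition nO (a b c d : F) := a ^+ 2 * eta i0 + b ^+ 2 * eta i1 + c ^+ 2 * eta i2 + d ^+ 2 * (eta i0 * eta i1 * eta i2).
Definition nZ (a d : F) := a ^+ 2 + d ^+ 2 * (eta i0 * eta i1 * eta i2).

Lemma L1b a b c d : cmul eta (mkE a b c d) (crev (mkE a b c d)) = sc (nE eta a b c d).
Proof. cases; expand; rewrite /nE; ring. Qed.
Lemma L2a a b c d : cmul eta (crev (mkO a b c d)) (mkO a b c d) = sc (nO a b c d).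
Proof. cases; expand; rewrite /nO; ring. Qed.
Lemma L2b a b c d : cmul eta (mkO a b c d) (crev (mkO a b c d)) = sc (nO a b c d).
Proof. cases; expand; rewrite /nO; ring. Qed.
Lemma L3a a d : cmul eta (crev (mkZ a d)) (mkZ a d) = sc (nZ a d).
Proof. cases; expand; rewrite /nZ; ring. Qed.
Lemma L3b a d : cmul eta (mkZ a d) (crev (mkZ a d)) = sc (nZ a d).
Proof. cases; expand; rewrite /nZ; ring. Qed.
Lemma L4E w0 w7 a b c d :
  cmul eta (crev (cmul eta (mkZ w0 w7) (mkE a b c d))) (cmul eta (mkZ w0 w7) (mkE a b c d))
  = sc (nZ w0 w7 * nE eta a b c d).
Proof. cases; expand; rewrite /nZ /nE; ring. Qed.
Lemma L4O w0 w7 a b c d :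
  cmul eta (crev (cmul eta (mkZ w0 w7) (mkO a b c d))) (cmul eta (mkZ w0 w7) (mkO a b c d))
  = sc (nZ w0 w7 * nO a b c d).
Proof. cases; expand; rewrite /nZ /nO; ring. Qed.
End Sec_M3_M3.
Set Implicit Arguments. Unset Strict Implicit. Unset Printing Implicit Defensive.
Import GRing.Theory.
Local Open Scope ring_scope.

Section Sec_M3b_M3b.
Variables (F : fieldType) (eta : 'I_3 -> F).
Ltac expand := rewrite ?cmul_sb3 ?big_bool /= ?crev_sb3 ?cmul_sb3 ?big_bool /= ?mk3E ?sc_sb3 /= /rv3 /bc3 /sgn /ee /=.
Ltac cases := apply: clif_eq3; case; case; case.

Lemma evenE (X : clif F 3) : even_elt X -> X = mkE (X (sb3 false false false))
  (X (sb3 true true false)) (X (sb3 true false true)) (X (sb3 false true true)).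
Proof. by move=> H; cases; rewrite mk3E //=; apply: H; rewrite card_sb3. Qed.
Lemma oddE (X : clif F 3) : odd_elt X -> X = mkO (X (sb3 true false false))
  (X (sb3 false true false)) (X (sb3 false false true)) (X (sb3 true true true)).
Proof. by move=> H; cases; rewrite mk3E //=; apply: H; rewrite card_sb3. Qed.
Lemma centerE (X : clif F 3) : in_center X -> X = mkZ (X (sb3 false false false)) (X (sb3 true true true)).
Proof.
rewrite /in_center /= => H; cases; rewrite mk3E //=; apply: H;
  first [exact: sb3_set0 | exact: sb3_setT].
Qed.
Lemma even_mkE a b c d : even_elt (mkE a b c d : clif F 3).
Proof.
move=> A; rewrite (sb3_bits A) card_sb3 mk3E.
by case: (i0 \in A); case: (i1 \in A); case: (i2 \in A).
Qed.
Lemma odd_mkO a b c d : odd_elt (mkO a b c d : clif F 3).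
Proof.
move=> A; rewrite (sb3_bits A) card_sb3 mk3E.
by case: (i0 \in A); case: (i1 \in A); case: (i2 \in A).
Qed.
Lemma center_mkZ a d : in_center (mkZ a d : clif F 3).
Proof.
rewrite /in_center /= => A; rewrite (sb3_bits A) mk3E.
case: (i0 \in A); case: (i1 \in A); case: (i2 \in A) => //=; rewrite ?sb3_000 ?sb3_111 eqxx //.
Qed.

Definition evp (T : clif F 3) := mkE (T (sb3 false false false)) (T (sb3 true true false))
  (T (sb3 true false true)) (T (sb3 false true true)).
Definition odp (T : clif F 3) := mkO (T (sb3 true false false)) (T (sb3 false true false))
  (T (sb3 false false true)) (T (sb3 true true true)).

Lemma split3 (T : clif F 3) A : T A = evp T A + odp T A.
Proof.
rewrite (sb3_bits A) /evp /odp !mk3E.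
by case: (i0 \in A); case: (i1 \in A); case: (i2 \in A); rewrite /= ?addr0 ?add0r.
Qed.

Lemma vecid (T : clif F 3) (a0 a1 a2 : bool) : (a0 + a1 + a2 == 1)%N ->
  cmul eta (crev T) T (sb3 a0 a1 a2) = 2 * cmul eta (crev (evp T)) (odp T) (sb3 a0 a1 a2).
Proof. case: a0; case: a1; case: a2 => // _; rewrite /evp /odp; expand; ring. Qed.
Lemma vecid' (T : clif F 3) (a0 a1 a2 : bool) : (a0 + a1 + a2 == 1)%N ->
  cmul eta (crev T) T (sb3 a0 a1 a2) = 2 * cmul eta (crev (odp T)) (evp T) (sb3 a0 a1 a2).
Proof. case: a0; case: a1; case: a2 => // _; rewrite /evp /odp; expand; ring. Qed.
Lemma evenz (T : clif F 3) (a0 a1 a2 : bool) : ~~ odd (a0 + a1 + a2)%N ->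
  cmul eta (crev (evp T)) (odp T) (sb3 a0 a1 a2) = 0 /\ cmul eta (crev (odp T)) (evp T) (sb3 a0 a1 a2) = 0.
Proof. case: a0; case: a1; case: a2 => // _; rewrite /evp /odp; split; expand; ring. Qed.
Lemma Jzero (T : clif F 3) : cmul eta (crev T) T (sb3 true true true) = 0.
Proof. expand; ring. Qed.
Lemma kdecomp (T : clif F 3) : cmul eta (crev T) T (sb3 false false false) =
  nE eta (T (sb3 false false false)) (T (sb3 true true false)) (T (sb3 true false true)) (T (sb3 false true true))
  + nO eta (T (sb3 true false false)) (T (sb3 false true false)) (T (sb3 false false true)) (T (sb3 true true true)).
Proof. expand; rewrite /nE /nO; ring. Qed.
End Sec_M3b_M3b.
Set Implicit Arguments. Unset Strict Implicit. Unset Printing Implicit Defensive.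
Import GRing.Theory.
Local Open Scope ring_scope.

Section Sec_M3c_M3c.
Variables (F : fieldType) (eta : 'I_3 -> F).
Ltac expand := rewrite ?cmul_sb3 ?big_bool /= ?crev_sb3 ?cmul_sb3 ?big_bool /= ?mk3E ?sc_sb3 /= /rv3 /bc3 /sgn /ee /=.
Ltac cases := apply: clif_eq3; case; case; case.

Lemma A_to_P3 (two : (2 : F) != 0) (T : clif F 3) :
  cinvertible eta T -> center_unit eta (cmul eta (crev T) T) -> inP eta T.
Proof.
move=> HTi [HC HCi].
set k := cmul eta (crev T) T (sb3 false false false).
have RT : cmul eta (crev T) T = sc k.
  move: HC; rewrite /in_center /= => HC.
  cases; first [ by rewrite sc_sb3 | by rewrite sc_sb3 Jzero
    | (rewrite sc_sb3 /=; apply: HC; [exact: sb3_set0 | exact: sb3_setT]) ].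
have knz : k != 0 by move: HCi; rewrite RT; exact: sc_inv.
have vz : forall a0 a1 a2 : bool, (a0 + a1 + a2 == 1)%N ->
    cmul eta (crev (evp T)) (odp T) (sb3 a0 a1 a2) = 0 /\
    cmul eta (crev (odp T)) (evp T) (sb3 a0 a1 a2) = 0.
  move=> a0 a1 a2 H; have := vecid eta T H; have := vecid' eta T H.
  rewrite RT sc_sb3.
  have -> : a0 || a1 || a2 by move: H; case: a0; case: a1; case: a2.
  move=> /esym/eqP; rewrite mulf_eq0 (negbTE two) /= => /eqP ->.
  by move=> /esym/eqP; rewrite mulf_eq0 (negbTE two) /= => /eqP ->.
set lam := cmul eta (crev (evp T)) (odp T) (sb3 true true true).
set mu := cmul eta (crev (odp T)) (evp T) (sb3 true true true).
have Hz : cmul eta (crev (evp T)) (odp T) = mkO 0 0 0 lam.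
  cases; rewrite mk3E /=; first [ done | by apply: (proj1 (evenz eta T _)) | by apply: (proj1 (vz _ _ _ _)) ].
have Hz' : cmul eta (crev (odp T)) (evp T) = mkO 0 0 0 mu.
  cases; rewrite mk3E /=; first [ done | by apply: (proj2 (evenz eta T _)) | by apply: (proj2 (vz _ _ _ _)) ].
set nx := nE eta (T (sb3 false false false)) (T (sb3 true true false)) (T (sb3 true false true)) (T (sb3 false true true)).
set no := nO eta (T (sb3 true false false)) (T (sb3 false true false)) (T (sb3 false false true)) (T (sb3 true true true)).
have kE : k = nx + no by rewrite /k kdecomp.
have [nx0|nxn] := eqVneq nx 0.
- have non : no != 0 by move: knz; rewrite kE nx0 add0r.
  have Hox : forall A, evp T A = no^-1 * cmul eta (odp T) (mkO 0 0 0 mu) A.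
    move=> A; have : cmul eta (odp T) (cmul eta (crev (odp T)) (evp T)) = scl no (evp T).
      by rewrite -assoc3 /odp L2b cmul_scl.
    rewrite Hz' => /(congr1 (fun f : clif F 3 => f A)); rewrite [RHS]ffunE => ->; by field.
  pose W := mkZ 1 (mu / no).
  have HT : T = cmul eta W (odp T).
    cases; rewrite [LHS]split3 Hox /W /odp; expand; by field.
  have kW : nZ eta 1 (mu / no) * no = k.
    have := L4O eta 1 (mu / no) (T (sb3 true false false)) (T (sb3 false true false))
      (T (sb3 false false true)) (T (sb3 true true true)).
    rewrite -/(odp T) -/W -HT RT => /(congr1 (fun f : clif F 3 => f (sb3 false false false))).
    by rewrite !sc_sb3 /= => ->.
  exists W, (odp T); split; last split; last split; last exact: HT.
  + split; first exact: center_mkZ.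
    apply: inv_of_norm (L3a _ _ _) (L3b _ _ _) _.
    by apply: contraNneq knz => H; rewrite -kW H mul0r.
  + exact: inv_of_norm (L2a _ _ _ _ _) (L2b _ _ _ _ _) non.
  + right; exact: odd_mkO.
- have Hxo : forall A, odp T A = nx^-1 * cmul eta (evp T) (mkO 0 0 0 lam) A.
    move=> A; have : cmul eta (evp T) (cmul eta (crev (evp T)) (odp T)) = scl nx (odp T).
      by rewrite -assoc3 /evp L1b cmul_scl.
    rewrite Hz => /(congr1 (fun f : clif F 3 => f A)); rewrite [RHS]ffunE => ->; by field.
  pose W := mkZ 1 (lam / nx).
  have HT : T = cmul eta W (evp T).
    cases; rewrite [LHS]split3 Hxo /W /evp; expand; by field.
  have kW : nZ eta 1 (lam / nx) * nx = k.
    have := L4E eta 1 (lam / nx) (T (sb3 false false false)) (T (sb3 true true false))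
      (T (sb3 true false true)) (T (sb3 false true true)).
    rewrite -/(evp T) -/W -HT RT => /(congr1 (fun f : clif F 3 => f (sb3 false false false))).
    by rewrite !sc_sb3 /= => ->.
  exists W, (evp T); split; last split; last split; last exact: HT.
  + split; first exact: center_mkZ.
    apply: inv_of_norm (L3a _ _ _) (L3b _ _ _) _.
    by apply: contraNneq knz => H; rewrite -kW H mul0r.
  + exact: inv_of_norm (L1a _ _ _ _ _) (L1b _ _ _ _ _) nxn.
  + left; exact: even_mkE.
Qed.

Lemma P_to_A3 (T : clif F 3) : inP eta T -> cinvertible eta T.
Proof.
move=> [W [S [[_ HWi] [HSi [_ ->]]]]]; apply: inv_mul HWi HSi; exact: assoc3.
Qed.

Lemma P_to_Q3 (T : clif F 3) : inP eta T -> center_unit eta (cmul eta (crev T) T).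
Proof.
move=> [W [S [[HWc HWi] [HSi [HS ->]]]]].
have EW := centerE HWc; rewrite EW in HWi *.
have kWn : nZ eta (W (sb3 false false false)) (W (sb3 true true true)) != 0.
  apply: rev_norm_nz HWi (L3a _ _ _); exact: assoc3.
case: HS => [HSe|HSo].
- have ES := evenE HSe; rewrite ES in HSi *; rewrite L4E.
  split; first exact: sc_center.
  apply: sc_invertible; rewrite mulf_neq0 //.
  apply: rev_norm_nz HSi (L1a _ _ _ _ _); exact: assoc3.
- have ES := oddE HSo; rewrite ES in HSi *; rewrite L4O.
  split; first exact: sc_center.
  apply: sc_invertible; rewrite mulf_neq0 //.
  apply: rev_norm_nz HSi (L2a _ _ _ _ _); exact: assoc3.
Qed.

Lemma main3 (two : (2 : F) != 0) :
  (forall T, inA eta T <-> inQ eta T) /\ (forall T, inQ eta T <-> inP eta T).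
Proof.
split => T; split.
- by move=> [Hi Hc]; split => //; exact: A_to_P3.
- by move=> [HP Hc]; split => //; exact: P_to_A3.
- by case.
- by move=> HP; split => //; exact: P_to_Q3.
Qed.
End Sec_M3c_M3c.
Set Implicit Arguments. Unset Strict Implicit. Unset Printing Implicit Defensive.
Import GRing.Theory.
Local Open Scope ring_scope.

Section Sec_T2_N2.
Variables (F : fieldType) (eta : 'I_2 -> F).
Definition j0 : 'I_2 := @Ordinal 2 0 isT.
Definition j1 : 'I_2 := @Ordinal 2 1 isT.
Definition sb2 (a0 a1 : bool) : {set 'I_2} := [set i : 'I_2 | nth false [:: a0; a1] i].
Lemma in_sb2 a0 a1 i : (i \in sb2 a0 a1) = nth false [:: a0; a1] i.
Proof. by rewrite inE. Qed.
Lemma sb2_bits (A : {set 'I_2}) : A = sb2 (j0 \in A) (j1 \in A).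
Proof.
apply/setP => i; rewrite in_sb2; case: i => [[|[|//]] Hi] /=;
 by congr (_ \in A); apply: val_inj.
Qed.
Lemma sum2 (G : {set 'I_2} -> F) :
  \sum_(A : {set 'I_2}) G A = \sum_(a0 : bool) \sum_(a1 : bool) G (sb2 a0 a1).
Proof.
transitivity (\sum_(p : bool * bool) G (sb2 p.1 p.2)).
  rewrite (reindex (fun p : bool * bool => sb2 p.1 p.2)) //.
  exists (fun A : {set 'I_2} => (j0 \in A, j1 \in A)) => [[a0 a1] _|A _] /=.
    by rewrite !in_sb2.
  by rewrite -sb2_bits.
by rewrite -(pair_bigA _ (fun (i : bool) (j : bool) => G (sb2 i j))).
Qed.
Definition bc2 a0 a1 b0 b1 :=
  sgn F (a1 && b0) * (ee (a0 && b0) (eta j0) * ee (a1 && b1) (eta j1)).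
Lemma blade_coef_sb2 a0 a1 b0 b1 :
  blade_coef eta (sb2 a0 a1) (sb2 b0 b1) = bc2 a0 a1 b0 b1.
Proof.
rewrite /blade_coef inv_countE prodE.
rewrite !big_ord_recr !big_ord0 /= !in_sb2 /=.
have -> : widen_ord (leqnSn 1) ord_max = j0 by apply: val_inj.
have -> : ord_max = j1 by apply: val_inj.
rewrite -signr_odd !oddD.
by case: a0; case: a1; case: b0; case: b1;
  rewrite /bc2 /sgn /ee /= ?expr0 ?expr1 ?mul1r ?mulr1.
Qed.
Lemma symd_sb2 a0 a1 b0 b1 :
  symd (sb2 a0 a1) (sb2 b0 b1) = sb2 (a0 (+) b0) (a1 (+) b1).
Proof.
apply/setP => i; rewrite /symd !inE.
by case: i => [[|[|//]] Hi] /=; [case: a0; case: b0|case: a1; case: b1].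
Qed.
Lemma cmul_sb2 (U V : clif F 2) c0 c1 :
  cmul eta U V (sb2 c0 c1) = \sum_(a0 : bool) \sum_(a1 : bool)
    U (sb2 a0 a1) * V (sb2 (a0 (+) c0) (a1 (+) c1)) *
    bc2 a0 a1 (a0 (+) c0) (a1 (+) c1).
Proof.
rewrite cmulE sum2; apply: eq_bigr => a0 _; apply: eq_bigr => a1 _.
by rewrite symd_sb2 blade_coef_sb2.
Qed.
Definition mk2 (f : bool -> bool -> F) : clif F 2 :=
  [ffun A : {set 'I_2} => f (j0 \in A) (j1 \in A)].
Lemma mk2E f a0 a1 : mk2 f (sb2 a0 a1) = f a0 a1.
Proof. by rewrite ffunE !in_sb2. Qed.
Lemma clif_eq2 (U V : clif F 2) :
  (forall a0 a1, U (sb2 a0 a1) = V (sb2 a0 a1)) -> U = V.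
Proof. by move=> H; apply/ffunP => A; rewrite (sb2_bits A); apply: H. Qed.
Lemma card_sb2 a0 a1 : #|sb2 a0 a1| = (a0 + a1)%N.
Proof.
rewrite -sum1_card big_mkcond !big_ord_recr big_ord0 /= !in_sb2 /=.
by case: a0; case: a1.
Qed.
Definition rv2 (a0 a1 : bool) := sgn F (a0 && a1).
Lemma crev_sb2 (U : clif F 2) a0 a1 :
  crev U (sb2 a0 a1) = rv2 a0 a1 * U (sb2 a0 a1).
Proof. rewrite ffunE card_sb2 -signr_odd. by case: a0; case: a1. Qed.
Lemma sb2_set0 a0 a1 : (a0 || a1) -> sb2 a0 a1 != set0.
Proof.
move=> H; apply/set0Pn.
case: a0 H => [_|]; first by exists j0; rewrite in_sb2.
by case: a1 => // _; exists j1; rewrite in_sb2.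
Qed.
Lemma sb2_00 : sb2 false false = set0.
Proof. by apply/setP => i; rewrite in_sb2 inE; case: i => [[|[|]]]. Qed.
Lemma sc_sb2 k a0 a1 : @sc F 2 k (sb2 a0 a1) = if a0 || a1 then 0 else k.
Proof.
rewrite ffunE; case: ifP => H; first by rewrite (negbTE (sb2_set0 H)) mul0r.
by move: H; case: a0; case: a1 => // _; rewrite sb2_00 eqxx mul1r.
Qed.

Ltac expand := rewrite ?cmul_sb2 ?big_bool /= ?crev_sb2 ?cmul_sb2 ?big_bool /= ?mk2E ?sc_sb2 /= /rv2 /bc2 /sgn /ee /=.
Ltac cases := apply: clif_eq2; case; case.

Lemma assoc2 (X Y Z : clif F 2) : cmul eta (cmul eta X Y) Z = cmul eta X (cmul eta Y Z).
Proof. cases; expand; ring. Qed.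

Definition mkE2 (a d : F) := mk2 (fun x y => match x, y with false, false => a | true, true => d | _, _ => 0 end).
Definition mkO2 (b c : F) := mk2 (fun x y => match x, y with true, false => b | false, true => c | _, _ => 0 end).
Definition nE2 (a d : F) := a ^+ 2 + d ^+ 2 * (eta j0 * eta j1).
Definition nO2 (b c : F) := b ^+ 2 * eta j0 + c ^+ 2 * eta j1.

Lemma M1a a d : cmul eta (crev (mkE2 a d)) (mkE2 a d) = sc (nE2 a d).
Proof. cases; expand; rewrite /nE2; ring. Qed.
Lemma M1b a d : cmul eta (mkE2 a d) (crev (mkE2 a d)) = sc (nE2 a d).
Proof. cases; expand; rewrite /nE2; ring. Qed.
Lemma M2a b c : cmul eta (crev (mkO2 b c)) (mkO2 b c) = sc (nO2 b c).
Proof. cases; expand; rewrite /nO2; ring. Qed.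
Lemma M2b b c : cmul eta (mkO2 b c) (crev (mkO2 b c)) = sc (nO2 b c).
Proof. cases; expand; rewrite /nO2; ring. Qed.
Lemma M3 w : cmul eta (crev (@sc F 2 w)) (sc w) = sc (w ^+ 2).
Proof. cases; expand; ring. Qed.
Lemma M4E w a d : cmul eta (crev (cmul eta (sc w) (mkE2 a d))) (cmul eta (sc w) (mkE2 a d))
  = sc (w ^+ 2 * nE2 a d).
Proof. cases; expand; rewrite /nE2; ring. Qed.
Lemma M4O w b c : cmul eta (crev (cmul eta (sc w) (mkO2 b c))) (cmul eta (sc w) (mkO2 b c))
  = sc (w ^+ 2 * nO2 b c).
Proof. cases; expand; rewrite /nO2; ring. Qed.

Definition evp2 (T : clif F 2) := mkE2 (T (sb2 false false)) (T (sb2 true true)).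
Definition odp2 (T : clif F 2) := mkO2 (T (sb2 true false)) (T (sb2 false true)).
Lemma split2 (T : clif F 2) A : T A = evp2 T A + odp2 T A.
Proof.
rewrite (sb2_bits A) /evp2 /odp2 !mk2E.
by case: (j0 \in A); case: (j1 \in A); rewrite /= ?addr0 ?add0r.
Qed.
Lemma vecid2 (T : clif F 2) (a0 a1 : bool) : (a0 + a1 == 1)%N ->
  cmul eta (crev T) T (sb2 a0 a1) = 2 * cmul eta (crev (evp2 T)) (odp2 T) (sb2 a0 a1).
Proof. case: a0; case: a1 => // _; rewrite /evp2 /odp2; expand; ring. Qed.
Lemma evenz2 (T : clif F 2) (a0 a1 : bool) : ~~ odd (a0 + a1)%N ->
  cmul eta (crev (evp2 T)) (odp2 T) (sb2 a0 a1) = 0.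
Proof. case: a0; case: a1 => // _; rewrite /evp2 /odp2; expand; ring. Qed.
Lemma kdecomp2 (T : clif F 2) : cmul eta (crev T) T (sb2 false false) =
  nE2 (T (sb2 false false)) (T (sb2 true true)) + nO2 (T (sb2 true false)) (T (sb2 false true)).
Proof. expand; rewrite /nE2 /nO2; ring. Qed.
Lemma crev_odp2 (T : clif F 2) : crev (odp2 T) = odp2 T.
Proof. by cases; rewrite /odp2; expand; rewrite ?mul1r ?mulr0. Qed.

Lemma evenE2 (X : clif F 2) : even_elt X -> X = mkE2 (X (sb2 false false)) (X (sb2 true true)).
Proof. by move=> H; cases; rewrite mk2E //=; apply: H; rewrite card_sb2. Qed.
Lemma oddE2 (X : clif F 2) : odd_elt X -> X = mkO2 (X (sb2 true false)) (X (sb2 false true)).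
Proof. by move=> H; cases; rewrite mk2E //=; apply: H; rewrite card_sb2. Qed.
Lemma centerE2 (X : clif F 2) : in_center X -> X = sc (X (sb2 false false)).
Proof. rewrite /in_center /= => H; cases; rewrite sc_sb2 //=; apply: H; exact: sb2_set0. Qed.
Lemma even_mkE2 a d : even_elt (mkE2 a d).
Proof. move=> A; rewrite (sb2_bits A) card_sb2 mk2E. by case: (j0 \in A); case: (j1 \in A). Qed.
Lemma odd_mkO2 b c : odd_elt (mkO2 b c).
Proof. move=> A; rewrite (sb2_bits A) card_sb2 mk2E. by case: (j0 \in A); case: (j1 \in A). Qed.
End Sec_T2_N2.
Set Implicit Arguments. Unset Strict Implicit. Unset Printing Implicit Defensive.
Import GRing.Theory.
Local Open Scope ring_scope.

Section Sec_M2_M2.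
Variables (F : fieldType) (eta : 'I_2 -> F).
Ltac cases := apply: clif_eq2; case; case.

Lemma A_to_P2 (two : (2 : F) != 0) (T : clif F 2) :
  cinvertible eta T -> center_unit eta (cmul eta (crev T) T) -> inP eta T.
Proof.
move=> HTi [HC HCi].
set k := cmul eta (crev T) T (sb2 false false).
have RT : cmul eta (crev T) T = sc k.
  move: HC; rewrite /in_center /= => HC.
  cases; first [ by rewrite sc_sb2 | (rewrite sc_sb2 /=; apply: HC; exact: sb2_set0) ].
have knz : k != 0 by move: HCi; rewrite RT; exact: sc_inv.
have vz : forall a0 a1 : bool, (a0 + a1 == 1)%N ->
    cmul eta (crev (evp2 T)) (odp2 T) (sb2 a0 a1) = 0.
  move=> a0 a1 H; have := vecid2 eta T H.
  rewrite RT sc_sb2.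
  have -> : a0 || a1 by move: H; case: a0; case: a1.
  by move=> /esym/eqP; rewrite mulf_eq0 (negbTE two) /= => /eqP ->.
have Hz : cmul eta (crev (evp2 T)) (odp2 T) = sc 0.
  cases; rewrite sc_sb2 /=; first [ by apply: evenz2 | by apply: vz ].
set nx := nE2 eta (T (sb2 false false)) (T (sb2 true true)).
set no := nO2 eta (T (sb2 true false)) (T (sb2 false true)).
have kE : k = nx + no by rewrite /k kdecomp2.
have sc1 : center_unit eta (@sc F 2 1).
  by split; [exact: sc_center | apply: sc_invertible; exact: oner_neq0].
have [nx0|nxn] := eqVneq nx 0.
- have non : no != 0 by move: knz; rewrite kE nx0 add0r.
  have Hx : forall A, crev (evp2 T) A = 0.
    move=> A; have : cmul eta (cmul eta (crev (evp2 T)) (odp2 T)) (crev (odp2 T)) = scl no (crev (evp2 T)).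
      by rewrite assoc2 /odp2 M2b cmul_scr.
    rewrite Hz cmul_scl => /(congr1 (fun f : clif F 2 => f A)).
    rewrite [LHS]ffunE [RHS]ffunE mul0r => /esym/eqP; rewrite mulf_eq0 (negbTE non) /=.
    by move=> /eqP.
  have Hx0 : evp2 T = sc 0.
    by apply: crev0; apply/ffunP => A; rewrite Hx [RHS]ffunE mulr0.
  exists (sc 1), (odp2 T); split => //; split.
    exact: inv_of_norm (M2a _ _ _) (M2b _ _ _) non.
  split; first by right; exact: odd_mkO2.
  rewrite cmul_scl; apply/ffunP => A; rewrite [RHS]ffunE mul1r (split2 T A) Hx0 [X in X + _]ffunE.
  by rewrite mulr0 add0r.
- have Hv : forall A, odp2 T A = 0.
    move=> A; have : cmul eta (evp2 T) (cmul eta (crev (evp2 T)) (odp2 T)) = scl nx (odp2 T).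
      by rewrite -assoc2 /evp2 M1b cmul_scl.
    rewrite Hz cmul_scr => /(congr1 (fun f : clif F 2 => f A)).
    rewrite [LHS]ffunE [RHS]ffunE mul0r => /esym/eqP; rewrite mulf_eq0 (negbTE nxn) /=.
    by move=> /eqP.
  exists (sc 1), (evp2 T); split => //; split.
    exact: inv_of_norm (M1a _ _ _) (M1b _ _ _) nxn.
  split; first by left; exact: even_mkE2.
  by rewrite cmul_scl; apply/ffunP => A; rewrite [RHS]ffunE mul1r (split2 T A) Hv addr0.
Qed.

Lemma P_to_A2 (T : clif F 2) : inP eta T -> cinvertible eta T.
Proof.
move=> [W [S [[_ HWi] [HSi [_ ->]]]]]; apply: inv_mul HWi HSi; exact: assoc2.
Qed.

Lemma P_to_Q2 (T : clif F 2) : inP eta T -> center_unit eta (cmul eta (crev T) T).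
Proof.
move=> [W [S [[HWc HWi] [HSi [HS ->]]]]].
have EW := centerE2 HWc; rewrite EW in HWi *.
have kWn : (W (sb2 false false)) ^+ 2 != 0.
  apply: rev_norm_nz HWi (M3 _ _); exact: assoc2.
case: HS => [HSe|HSo].
- have ES := evenE2 HSe; rewrite ES in HSi *; rewrite M4E.
  split; first exact: sc_center.
  apply: sc_invertible; rewrite mulf_neq0 //.
  apply: rev_norm_nz HSi (M1a _ _ _); exact: assoc2.
- have ES := oddE2 HSo; rewrite ES in HSi *; rewrite M4O.
  split; first exact: sc_center.
  apply: sc_invertible; rewrite mulf_neq0 //.
  apply: rev_norm_nz HSi (M2a _ _ _); exact: assoc2.
Qed.

Lemma main2 (two : (2 : F) != 0) :
  (forall T, inA eta T <-> inQ eta T) /\ (forall T, inQ eta T <-> inP eta T).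
Proof.
split => T; split.
- by move=> [Hi Hc]; split => //; exact: A_to_P2.
- by move=> [HP Hc]; split => //; exact: P_to_A2.
- by case.
- by move=> HP; split => //; exact: P_to_Q2.
Qed.
End Sec_M2_M2.
Set Implicit Arguments. Unset Strict Implicit. Unset Printing Implicit Defensive.
Import GRing.Theory.
Local Open Scope ring_scope.

Section Sec_N4_Pr.
Variables (F : fieldType) (n : nat) (eta : 'I_n -> F).
Definition pr (s : {set 'I_n}) (a b : F) : clif F n :=
  [ffun A : {set 'I_n} => if A == set0 then a else if A == s then b else 0].

Lemma symd0r (A : {set 'I_n}) : symd A set0 = A.
Proof. by rewrite symdC symd0. Qed.

Lemma cmul_pr (s : {set 'I_n}) a b a' b' : s != set0 ->
  cmul eta (pr s a b) (pr s a' b') = pr s (a * a' + b * b' * blade_coef eta s s) (a * b' + b * a').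
Proof.
move=> s0; apply/ffunP => C; rewrite cmulE (bigD1 set0) //= (bigD1 s) //= big1 ?addr0; last first.
  move=> A /andP [HA HA']; rewrite /pr ffunE (negbTE HA) (negbTE HA') !mul0r //.
rewrite !ffunE eqxx (negbTE s0) eqxx symd0 blade_coef0l mulr1.
have [->|C0] := eqVneq C set0.
  by rewrite symd0r (negbTE s0) eqxx.
have [->|Cs] := eqVneq C s.
  by rewrite symdd eqxx blade_coef0r mulr1.
have -> : (symd s C == set0) = false.
  apply/negbTE; apply: contra Cs => /eqP H; by rewrite -(symdK s C) H symd0r.
have -> : (symd s C == s) = false.
  apply/negbTE; apply: contra C0 => /eqP H; by rewrite -(symdK s C) H symdd.
by rewrite /= !mulr0 !mul0r addr0.
Qed.

Lemma crev_pr (s : {set 'I_n}) a b : crev (pr s a b) = pr s a ((-1) ^+ ((#|s| * (#|s| - 1)) %/ 2) * b).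
Proof.
apply/ffunP => A; rewrite !ffunE.
have [->|A0] := eqVneq A set0; first by rewrite cards0 mul0n div0n expr0 mul1r.
by have [->|As] := eqVneq A s; rewrite ?mulr0.
Qed.

Lemma cone_pr (s : {set 'I_n}) : @cone F n = pr s 1 0.
Proof. by apply/ffunP => A; rewrite !ffunE; case: (A == set0) => //; case: (A == s). Qed.

Lemma center_pr (s : {set 'I_n}) a : in_center (pr s a 0).
Proof.
by rewrite /in_center; case: ifP => _ A HA *; rewrite ffunE (negbTE HA); case: (A == s).
Qed.

Lemma pr_eq (s : {set 'I_n}) a b a' b' : a = a' -> b = b' -> pr s a b = pr s a' b'.
Proof. by move=> -> ->. Qed.
End Sec_N4_Pr.

Section Sec_N4_N4.
Variables (F : fieldType) (eta : 'I_4 -> F).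
Definition k0 : 'I_4 := @Ordinal 4 0 isT.
Definition k1 : 'I_4 := @Ordinal 4 1 isT.
Definition k2 : 'I_4 := @Ordinal 4 2 isT.
Definition s4 : {set 'I_4} := [set i : 'I_4 | (i < 3)%N].

Lemma s4_0 : s4 != set0.
Proof. by apply/set0Pn; exists k0; rewrite inE. Qed.

Lemma card_s4 : #|s4| = 3%N.
Proof. by rewrite -sum1_card big_mkcond !big_ord_recr big_ord0 /= !inE. Qed.

Lemma bc_s4 : blade_coef eta s4 s4 = - (eta k0 * eta k1 * eta k2).
Proof.
rewrite /blade_coef inv_countE prodE !big_ord_recr !big_ord0 /= !inE /=.
have -> : widen_ord (leqnSn 3) (widen_ord (leqnSn 2) (widen_ord (leqnSn 1) ord_max)) = k0 by apply: val_inj.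
have -> : widen_ord (leqnSn 3) (widen_ord (leqnSn 2) ord_max) = k1 by apply: val_inj.
have -> : widen_ord (leqnSn 3) ord_max = k2 by apply: val_inj.
rewrite -signr_odd !oddD /= expr1; ring.
Qed.

Lemma sg3 : (-1) ^+ ((#|s4| * (#|s4| - 1)) %/ 2) = -1 :> F.
Proof. by rewrite card_s4 -signr_odd. Qed.

Lemma main4 (two : (2 : F) != 0) (h : 4 + eta k0 * eta k1 * eta k2 != 0) :
  ~ (forall T, inQ eta T <-> inA eta T).
Proof.
set m := 4 + eta k0 * eta k1 * eta k2.
pose T := pr s4 (2 : F) 1.
have HA : inA eta T.
  split.
    exists (pr s4 (2 / m) (-1 / m)); rewrite !cmul_pr ?s4_0 // bc_s4 (@cone_pr F 4 s4); split;
      apply: pr_eq; rewrite /m; by field.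
  rewrite /T crev_pr sg3 cmul_pr ?s4_0 // bc_s4.
  rewrite (_ : pr s4 _ _ = pr s4 m 0); last by apply: pr_eq; rewrite /m; ring.
  split; first exact: center_pr.
  exists (pr s4 m^-1 0); rewrite !cmul_pr ?s4_0 // (@cone_pr F 4 s4); split;
    apply: pr_eq; rewrite /m; by field.
move=> Hiff; have [[W [S [[HWc HWi] [HSi [HS ET]]]]] _] := (Hiff T).2 HA.
move: HWc; rewrite /in_center /= => HWc.
have EW : W = sc (W set0).
  apply/ffunP => A; have [->|A0] := eqVneq A set0; first by rewrite sc_set0.
  by rewrite ffunE (negbTE A0) mul0r HWc.
rewrite EW cmul_scl in ET.
have E0 := congr1 (fun f : clif F 4 => f set0) ET.
have E1 := congr1 (fun f : clif F 4 => f s4) ET.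
move: E0 E1; rewrite /T !ffunE eqxx (negbTE s4_0) eqxx => E0 E1.
case: HS => [He|Ho].
- move: E1; rewrite He ?card_s4 // mulr0 => /eqP; by rewrite oner_eq0.
- move: E0; rewrite Ho ?cards0 // mulr0 => /eqP; by rewrite (negbTE two).
Qed.
End Sec_N4_N4.
Local Open Scope ring_scope.
Import GRing.Theory Num.Theory.

Lemma two_nz (R : numDomainType) : (2 : R) != 0.
Proof. by rewrite pnatr_eq0. Qed.

Lemma four_nz (R : numDomainType) (x y z : R) :
  (x = 1 \/ x = -1) -> (y = 1 \/ y = -1) -> (z = 1 \/ z = -1) -> 4 + x * y * z != 0.
Proof.
have H5 : (5 : R) != 0 by rewrite pnatr_eq0.
have H3 : (3 : R) != 0 by rewrite pnatr_eq0.
by case=> ->; case=> ->; case=> ->;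
  [ rewrite (_ : 4 + 1 * 1 * 1 = 5 :> R) //; ring
  | rewrite (_ : 4 + 1 * 1 * -1 = 3 :> R) //; ring
  | rewrite (_ : 4 + 1 * -1 * 1 = 3 :> R) //; ring
  | rewrite (_ : 4 + 1 * -1 * -1 = 5 :> R) //; ring
  | rewrite (_ : 4 + -1 * 1 * 1 = 3 :> R) //; ring
  | rewrite (_ : 4 + -1 * 1 * -1 = 5 :> R) //; ring
  | rewrite (_ : 4 + -1 * -1 * 1 = 5 :> R) //; ring
  | rewrite (_ : 4 + -1 * -1 * -1 = 3 :> R) //; ring ].
Qed.

Theorem mainTheorem15 (R : realType) :
  (* real case, 2 <= n <= 3 *)
  (forall p q : nat, (2 <= p + q <= 3)%N ->
     (forall T, inA (eta_pq R p q) T <-> inQ (eta_pq R p q) T) /\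
     (forall T, inQ (eta_pq R p q) T <-> inP (eta_pq R p q) T)) /\
  (* complex case, 2 <= n <= 3 *)
  (forall n : nat, (2 <= n <= 3)%N ->
     (forall T, inA (eta_C R n) T <-> inQ (eta_C R n) T) /\
     (forall T, inQ (eta_C R n) T <-> inP (eta_C R n) T)) /\
  (* real case, n = 4: Q <> A *)
  (forall p q : nat, (p + q = 4)%N ->
     ~ (forall T, inQ (eta_pq R p q) T <-> inA (eta_pq R p q) T)) /\
  (* complex case, n = 4: Q <> A *)
  ~ (forall T, inQ (eta_C R 4) T <-> inA (eta_C R 4) T).
Proof.
split; [|split; [|split]].
- move=> p q Hpq; have [H|H] : (p + q = 2 \/ p + q = 3)%N by lia.
  + move: (eta_pq R p q); rewrite H => eta; exact: main2 (two_nz R).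
  + move: (eta_pq R p q); rewrite H => eta; exact: main3 (two_nz R).
- move=> n Hn; have [H|H] : (n = 2 \/ n = 3)%N by lia.
  + subst n; exact: main2 (two_nz _).
  + subst n; exact: main3 (two_nz _).
- move=> p q H.
  have He : forall i, eta_pq R p q i = 1 \/ eta_pq R p q i = -1.
    by move=> i; rewrite /eta_pq; case: ifP; [left|right].
  move: (eta_pq R p q) He; rewrite H => eta He.
  apply: main4; first exact: two_nz.
  exact: four_nz.
- apply: main4; first exact: two_nz.
  by apply: four_nz; left.
Qed.
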